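(* Fix $a>1$ and define, for $(x,y)\in\mathbb R^2$ with $x+y\neq 0$, $$T(x,y)=\big(f(x,y),g(x,y)\big),\qquad f(x,y)=\frac{a^x(a^{2y}-1)}{(a^x+a^y)(a^{x+y}-1)},\quad g(x,y)=\frac{2a^{x+y}}{(a^x+a^y)(a^{x+y}-1)}.$$ Then: (a) for every $c$, the image under $T$ of the part of the vertical line $x=c$ lying in the half-plane $x+y>0$ is contained in a line through the point $P=(1,0)$ of the $uv$-plane; (b) for every $c$, the image under $T$ of the part of the horizontal line $y=c$ lying in the half-plane $x+y>0$ is contained in a line through the origin $O=(0,0)$ of the $uv$-plane; (c) for every axes-parallel square with vertices $A=(x,y)$, $B=(x+l,y)$, $C=(x+l,y+l)$, $D=(x,y+l)$, where $l>0$ and $x+y>0$ (so the square lies in the half-plane $x+y>0$), the points $A'=T(A),B'=T(B),C'=T(C),D'=T(D)$ are the vertices, in this order, of a tangential quadrilateral; in particular $|A'B'|+|C'D'|=|B'C'|+|D'A'|$.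
   Context: A quadrilateral is tangential if it admits an inscribed circle tangent to all four sides; equivalently (Pitot–Steiner), the sums of the lengths of the two pairs of opposite sides are equal. *)

(* Defs.v *)
From Stdlib Require Import Reals.
Open Scope R_scope.

Definition pt := (R * R)%type.

Definition apow (a x : R) : R := Rpower a x.

Definition Tf (a x y : R) : R :=
  apow a x * (apow a (2 * y) - 1) / ((apow a x + apow a y) * (apow a (x + y) - 1)).
Definition Tg (a x y : R) : R :=
  2 * apow a (x + y) / ((apow a x + apow a y) * (apow a (x + y) - 1)).
Definition T (a : R) (p : pt) : pt := (Tf a (fst p) (snd p), Tg a (fst p) (snd p)).

(* A line in the plane, given by (alpha, beta, gamma) with (alpha,beta) <> (0,0):
   { (u,v) | alpha*u + beta*v + gamma = 0 }. *)
Definition on_line (al be ga : R) (p : pt) : Prop := al * fst p + be * snd p + ga = 0.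

Definition pdist (p q : pt) : R :=
  sqrt ((fst q - fst p) ^ 2 + (snd q - snd p) ^ 2).

Definition cross (p q r : pt) : R :=
  (fst q - fst p) * (snd r - snd p) - (snd q - snd p) * (fst r - fst p).

(* A, B, C, D (in this order) are the vertices of a (strictly) convex
   quadrilateral with orientation s (s = 1 counterclockwise, s = -1 clockwise). *)
Definition convex_quad_or (s : R) (A B C D : pt) : Prop :=
  0 < s * cross A B C /\ 0 < s * cross B C D /\
  0 < s * cross C D A /\ 0 < s * cross D A B.

(* Q lies on the interior side of the oriented side PQ' at distance exactly r
   from the line PQ'. *)
Definition tangent_side (s : R) (Q : pt) (r : R) (P P' : pt) : Prop :=
  s * cross P P' Q = r * pdist P P'.

(* Since Q is on the
   interior side of each side line at distance r, the disc lies in the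
   quadrilateral and touches each side (the touching point lies on the side). *)
Definition tangential_quad (A B C D : pt) : Prop :=
  exists s : R, (s = 1 \/ s = -1) /\ convex_quad_or s A B C D /\
  exists (Q : pt) (r : R), 0 < r /\
    tangent_side s Q r A B /\ tangent_side s Q r B C /\
    tangent_side s Q r C D /\ tangent_side s Q r D A.

(* Main.v *)
Require Import Defs.
From Stdlib Require Import Reals Lra Psatz.
Open Scope R_scope.

Definition F (p q : R) := p * (q * q - 1) / ((p + q) * (p * q - 1)).
Definition G (p q : R) := 2 * (p * q) / ((p + q) * (p * q - 1)).
Definition Dd (p q : R) := (p + q) * (p * q - 1).
Definition hd p q t := p*q*(t-1)*(p*p*t+1)/(Dd p q * Dd (p*t) q).
Definition kd p q t := p*q*(t-1)*(q*q*t+1)/(Dd p q * Dd p (q*t)).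

Lemma Dd_pos p q : 0 < p -> 0 < q -> 1 < p * q -> 0 < Dd p q.
Proof. intros; unfold Dd; apply Rmult_lt_0_compat; lra. Qed.

Lemma hd_pos p q t : 0 < p -> 0 < q -> 1 < p * q -> 1 < t -> 0 < hd p q t.
Proof.
  intros. unfold hd.
  assert (1 < p*t*q) by nra.
  assert (0 < Dd p q) by (apply Dd_pos; lra).
  assert (0 < Dd (p*t) q) by (apply Dd_pos; nra).
  apply Rdiv_lt_0_compat; [|nra].
  assert (0 < p*q) by nra. assert (0 < p*p*t+1) by nra.
  repeat apply Rmult_lt_0_compat; lra.
Qed.

Lemma kd_pos p q t : 0 < p -> 0 < q -> 1 < p * q -> 1 < t -> 0 < kd p q t.
Proof.
  intros. unfold kd.
  assert (1 < p*(q*t)) by nra.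
  assert (0 < Dd p q) by (apply Dd_pos; lra).
  assert (0 < Dd p (q*t)) by (apply Dd_pos; nra).
  apply Rdiv_lt_0_compat; [|nra].
  assert (0 < p*q) by nra. assert (0 < q*q*t+1) by nra.
  repeat apply Rmult_lt_0_compat; lra.
Qed.

Lemma pdist_eq P P' K : 0 <= K ->
  (fst P' - fst P)^2 + (snd P' - snd P)^2 = K^2 -> pdist P P' = K.
Proof. intros HK H. unfold pdist. rewrite H. now apply sqrt_pow2. Qed.

Lemma quad_alg p q t : 0 < p -> 0 < q -> 1 < p * q -> 1 < t ->
  let A := (F p q, G p q) in
  let B := (F (p*t) q, G (p*t) q) in
  let C := (F (p*t) (q*t), G (p*t) (q*t)) in
  let D := (F p (q*t), G p (q*t)) in
  tangential_quad A B C D /\ pdist A B + pdist C D = pdist B C + pdist D A.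
Proof.
  intros hp hq hpq ht A B C D.
  assert (h1 : 1 < p*t*q) by nra.
  assert (h2 : 1 < p*(q*t)) by nra.
  assert (h3 : 1 < p*t*(q*t)) by nra.
  assert (h4 : 1 < p*q*t) by nra.
  assert (hpt : 0 < p*t) by nra. assert (hqt : 0 < q*t) by nra.
  assert (n1 : (p+q)*(p*q-1) <> 0) by nra.
  assert (n2 : (p*t+q)*(p*t*q-1) <> 0) by nra.
  assert (n3 : (p+q*t)*(p*(q*t)-1) <> 0) by nra.
  assert (n4 : (p*t+q*t)*(p*t*(q*t)-1) <> 0) by nra.
  assert (n5 : (p+q)*(p*q*t-1) <> 0) by nra.
  assert (n6 : p*q*t - 1 <> 0) by nra.
  assert (n7 : p*t*q - 1 <> 0) by nra.
  assert (n8 : p*(q*t) - 1 <> 0) by nra.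
  assert (n9 : p*t*(q*t) - 1 <> 0) by nra.
  assert (n10 : p*q - 1 <> 0) by nra.
  assert (m1 : p + q <> 0) by nra.
  assert (m2 : p*t + q <> 0) by nra.
  assert (m3 : p + q*t <> 0) by nra.
  assert (m4 : p*t + q*t <> 0) by nra.
  set (AB := (q*q+1) * hd p q t).
  set (BC := ((p*t)*(p*t)+1) * kd (p*t) q t).
  set (CD := ((q*t)*(q*t)+1) * hd p (q*t) t).
  set (DA := (p*p+1) * kd p q t).
  assert (e1 : pdist A B = AB).
  { apply pdist_eq. unfold AB. pose proof (hd_pos p q t hp hq hpq ht). apply Rmult_le_pos; [nra|lra].
    unfold A, B, AB, hd, Dd, F, G; simpl; field; repeat split; auto. }
  assert (e2 : pdist B C = BC).
  { apply pdist_eq. unfold BC. pose proof (kd_pos (p*t) q t hpt hq h1 ht). apply Rmult_le_pos; [nra|lra].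
    unfold B, C, BC, kd, Dd, F, G; simpl; field; repeat split; auto. }
  assert (e3 : pdist C D = CD).
  { apply pdist_eq. unfold CD. pose proof (hd_pos p (q*t) t hp hqt h2 ht). apply Rmult_le_pos; [nra|lra].
    unfold C, D, CD, hd, Dd, F, G; simpl; field; repeat split; auto. }
  assert (e4 : pdist D A = DA).
  { apply pdist_eq. unfold DA. pose proof (kd_pos p q t hp hq hpq ht). apply Rmult_le_pos; [nra|lra].
    unfold D, A, DA, kd, Dd, F, G; simpl; field; repeat split; auto. }
  split.
  - exists 1. split; [left; reflexivity|]. split.
    + unfold convex_quad_or. rewrite !Rmult_1_l.
      pose proof (hd_pos p q t hp hq hpq ht).
      pose proof (hd_pos p (q*t) t hp hqt h2 ht).
      pose proof (kd_pos p q t hp hq hpq ht).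
      pose proof (kd_pos (p*t) q t hpt hq h1 ht).
      pose proof (Dd_pos p q hp hq hpq).
      pose proof (Dd_pos (p*t) q hpt hq h1).
      pose proof (Dd_pos p (q*t) hp hqt h2).
      pose proof (Dd_pos (p*t) (q*t) hpt hqt h3).
      repeat split.
      * replace (cross A B C) with (hd p q t * kd (p*t) q t * 2 * Dd (p*t) q).
        { apply Rmult_lt_0_compat; [|lra]. apply Rmult_lt_0_compat; [|lra]. nra. }
        unfold A, B, C, cross, hd, kd, Dd, F, G; simpl; field; repeat split; auto.
      * replace (cross B C D) with (kd (p*t) q t * hd p (q*t) t * 2 * Dd (p*t) (q*t)).
        { apply Rmult_lt_0_compat; [|lra]. apply Rmult_lt_0_compat; [|lra]. nra. }
        unfold D, B, C, cross, hd, kd, Dd, F, G; simpl; field; repeat split; auto.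
      * replace (cross C D A) with (hd p (q*t) t * kd p q t * 2 * Dd p (q*t)).
        { apply Rmult_lt_0_compat; [|lra]. apply Rmult_lt_0_compat; [|lra]. nra. }
        unfold D, A, C, cross, hd, kd, Dd, F, G; simpl; field; repeat split; auto.
      * replace (cross D A B) with (kd p q t * hd p q t * 2 * Dd p q).
        { apply Rmult_lt_0_compat; [|lra]. apply Rmult_lt_0_compat; [|lra]. nra. }
        unfold D, A, B, cross, hd, kd, Dd, F, G; simpl; field; repeat split; auto.
    + exists (p*(q*q*t-1)/((p+q)*(p*q*t-1)), p*q*(1+t)/((p+q)*(p*q*t-1))).
      exists (p*q*(t-1)/((p+q)*(p*q*t-1))).
      split.
      { apply Rdiv_lt_0_compat; [|nra]. assert (0 < p*q) by nra. nra. }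
      unfold tangent_side. rewrite e1, e2, e3, e4, !Rmult_1_l.
      repeat split.
      * unfold A, B, AB, cross, hd, Dd, F, G; simpl; field; repeat split; auto.
      * unfold B, C, BC, cross, kd, Dd, F, G; simpl; field; repeat split; auto.
      * unfold C, D, CD, cross, hd, Dd, F, G; simpl; field; repeat split; auto.
      * unfold D, A, DA, cross, kd, Dd, F, G; simpl; field; repeat split; auto.
  - rewrite e1, e2, e3, e4. unfold AB, BC, CD, DA, hd, kd, Dd. field; repeat split; auto.
Qed.

Lemma apow_plus a x y : apow a (x + y) = apow a x * apow a y.
Proof. unfold apow. apply Rpower_plus. Qed.
Lemma apow_2 a y : apow a (2 * y) = apow a y * apow a y.
Proof. replace (2*y) with (y+y) by ring. apply apow_plus. Qed.
Lemma apow_pos a x : 0 < apow a x.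
Proof. unfold apow, Rpower. apply exp_pos. Qed.
Lemma apow_gt1 a x : 1 < a -> 0 < x -> 1 < apow a x.
Proof. intros. unfold apow. rewrite <- (Rpower_O a) by lra. now apply Rpower_lt. Qed.
Lemma Tf_F a x y : Tf a x y = F (apow a x) (apow a y).
Proof. unfold Tf, F. rewrite apow_2, apow_plus. reflexivity. Qed.
Lemma Tg_G a x y : Tg a x y = G (apow a x) (apow a y).
Proof. unfold Tg, G. rewrite apow_plus. reflexivity. Qed.

Theorem theorem6p1 (a : R) (ha : 1 < a) :
  (* (a) vertical lines map into lines through P = (1,0) *)
  (forall c : R, exists al be ga : R, (al <> 0 \/ be <> 0) /\
      on_line al be ga (1, 0) /\
      forall y : R, 0 < c + y -> on_line al be ga (T a (c, y))) /\
  (* (b) horizontal lines map into lines through O = (0,0) *)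
  (forall c : R, exists al be ga : R, (al <> 0 \/ be <> 0) /\
      on_line al be ga (0, 0) /\
      forall x : R, 0 < x + c -> on_line al be ga (T a (x, c))) /\
  (* (c) images of axes-parallel squares are tangential quadrilaterals *)
  (forall x y l : R, 0 < l -> 0 < x + y ->
     let A' := T a (x, y) in
     let B' := T a (x + l, y) in
     let C' := T a (x + l, y + l) in
     let D' := T a (x, y + l) in
     tangential_quad A' B' C' D' /\
     pdist A' B' + pdist C' D' = pdist B' C' + pdist D' A').
Proof.
  split; [|split].
  - intro c. pose proof (apow_pos a c) as hp. set (p := apow a c) in *.
    exists (2*p), (p*p-1), (-(2*p)). split; [left; lra|]. split.
    + unfold on_line; simpl; ring.
    + intros y Hy. unfold on_line, T; simpl. rewrite Tf_F, Tg_G. fold p.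
      pose proof (apow_pos a y) as hq. pose proof (apow_gt1 a (c+y) ha Hy) as hpq.
      rewrite apow_plus in hpq. fold p in hpq. set (q := apow a y) in *.
      unfold F, G. field. split; nra.
  - intro c. pose proof (apow_pos a c) as hq. set (q := apow a c) in *.
    exists (2*q), (-(q*q-1)), 0. split; [left; lra|]. split.
    + unfold on_line; simpl; ring.
    + intros x Hx. unfold on_line, T; simpl. rewrite Tf_F, Tg_G. fold q.
      pose proof (apow_pos a x) as hp. pose proof (apow_gt1 a (x+c) ha Hx) as hpq.
      rewrite apow_plus in hpq. fold q in hpq. set (p := apow a x) in *.
      unfold F, G. field. split; nra.
  - intros x y l hl hxy. cbv zeta. unfold T; cbn [fst snd].
    rewrite !Tf_F, !Tg_G, !(apow_plus a x l), !(apow_plus a y l).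
    pose proof (apow_gt1 a (x+y) ha hxy) as hpq. rewrite apow_plus in hpq.
    apply quad_alg; auto using apow_pos, apow_gt1.
Qed.
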